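(* Let $X=G/K$ be a symmetric space of non-compact type of rank $r$, with base point, Cartan decomposition $\mathfrak g=\mathfrak k+\mathfrak p$ and $\mathfrak p$ identified with the tangent space at the base point. Let $1\le k\le r$ and suppose $Y\times\mathbb R^k\subset X$ is a totally geodesic submanifold through the base point (a Riemannian product with an isometric Euclidean $\mathbb R^k$-factor) with $\dim(Y\times\mathbb R^k)=\mathrm{srk}^k(X)$; let $V_k\subset\mathfrak p$ be the $k$-dimensional subspace tangent to the $\mathbb R^k$-factor. Then for any maximal abelian subspace $\mathfrak a\subset\mathfrak p$ containing $V_k$, the Lie triple system corresponding to $Y\times\mathbb R^k$ is $\mathfrak p'=\mathfrak a\oplus\bigoplus_{\alpha\in\Lambda^+,\ \alpha(V_k)=0}\mathfrak p_\alpha$.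
   Context: $\mathrm{srk}^k(X)$, the $k$-th splitting rank, is the maximal dimension of a totally geodesic submanifold of $X$ which splits off an isometric $\mathbb R^k$-factor. For a maximal abelian $\mathfrak a\subset\mathfrak p$, $\Lambda$ is the set of restricted roots, $\Lambda^+$ the positive roots, $\mathfrak p_\alpha=(\mathfrak g_\alpha\oplus\mathfrak g_{-\alpha})\cap\mathfrak p$. Totally geodesic submanifolds through the base point correspond to Lie triple systems $\mathfrak p'\subset\mathfrak p$ (subspaces with $[\mathfrak p',[\mathfrak p',\mathfrak p']]\subset\mathfrak p'$) via tangent spaces. *)

(* Defs.v *)
(* real semisimple Lie algebras of noncompact type realised as
   transpose-closed Lie algebras of real n x n matrices (Cartan involution
   theta X = - X^T, k = skew part, p = symmetric part). *)
From HB Require Import structures.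
From mathcomp Require Import all_boot all_order all_algebra.
From mathcomp Require Import reals.
Set Implicit Arguments. Unset Strict Implicit. Unset Printing Implicit Defensive.
Import Order.TTheory GRing.Theory Num.Theory.
Local Open Scope ring_scope.

Section SymSpace.
Variables (R : realType) (n : nat).
Local Notation mx := 'M[R]_n.

Definition lie (A B : mx) : mx := A *m B - B *m A.

Definition lie_subalg (g : {vspace mx}) :=
  forall A B, A \in g -> B \in g -> lie A B \in g.
Definition transpose_closed (g : {vspace mx}) :=
  forall A, A \in g -> A^T \in g.

Definition is_ideal (g I : {vspace mx}) :=
  (I <= g)%VS /\ forall A B, A \in g -> B \in I -> lie A B \in I.

Definition semisimple (g : {vspace mx}) :=
  forall I, is_ideal g I -> (forall A B, A \in I -> B \in I -> lie A B = 0) ->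
    I = 0%VS.

Definition no_compact_ideal (g : {vspace mx}) :=
  forall I, is_ideal g I -> (forall A, A \in I -> A^T = - A) -> I = 0%VS.

Definition noncompact_type (g : {vspace mx}) :=
  [/\ lie_subalg g, transpose_closed g, semisimple g & no_compact_ideal g].

Definition in_p (g : {vspace mx}) (X : mx) := X \in g /\ X^T = X.
Definition sub_p (g S : {vspace mx}) := forall X, X \in S -> in_p g X.

Definition abelian_sub (S : {vspace mx}) :=
  forall A B, A \in S -> B \in S -> lie A B = 0.

Definition max_abelian (g a : {vspace mx}) :=
  [/\ sub_p g a, abelian_sub a &
      forall b, sub_p g b -> abelian_sub b -> (a <= b)%VS -> b = a].

Definition rank_is (g : {vspace mx}) (r : nat) :=
  exists a, max_abelian g a /\ \dim a = r.

Definition lts (g P : {vspace mx}) :=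
  sub_p g P /\ forall A B C, A \in P -> B \in P -> C \in P ->
    lie A (lie B C) \in P.

(* the totally geodesic submanifold Exp(P) splits off an isometric R^k factor
   tangent to V *)
Definition splits_with (g P V : {vspace mx}) (k : nat) :=
  [/\ lts g P, (V <= P)%VS, \dim V = k &
      forall v w, v \in V -> w \in P -> lie v w = 0].

Definition splits (g P : {vspace mx}) (k : nat) :=
  exists V, splits_with g P V k.

Definition srk_is (g : {vspace mx}) (k d : nat) :=
  (exists P, splits g P k /\ \dim P = d) /\
  (forall P, splits g P k -> (\dim P <= d)%N).

Definition root_space (g a : {vspace mx}) (al : mx -> R) (X : mx) :=
  X \in g /\ forall H, H \in a -> lie H X = al H *: X.

Definition is_root (g a : {vspace mx}) (al : mx -> R) :=
  [/\ (forall (s t : R) H H', H \in a -> H' \in a ->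
          al (s *: H + t *: H') = s * al H + t * al H'),
      (exists H, H \in a /\ al H != 0) &
      (exists X, X != 0 /\ root_space g a al X)].

Definition p_root (g a : {vspace mx}) (al : mx -> R) (X : mx) :=
  X^T = X /\ exists Y Z, [/\ root_space g a al Y,
                            root_space g a (fun H => - al H) Z & X = Y + Z].

(* H0 in a is regular: no root vanishes on it; it defines the positive
   system Lambda^+ = {alpha | alpha(H0) > 0} *)
Definition regular (g a : {vspace mx}) (H0 : mx) :=
  H0 \in a /\ forall al, is_root g a al -> al H0 != 0.

Definition in_a_plus_roots (g a V : {vspace mx}) (H0 : mx) (X : mx) :=
  exists (H : mx) (m : nat) (al : 'I_m -> mx -> R) (Xs : 'I_m -> mx),
    [/\ H \in a,
        forall i, [/\ is_root g a (al i), 0 < al i H0,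
                      (forall v, v \in V -> al i v = 0) & p_root g a (al i) (Xs i)] &
        X = H + \sum_(i < m) Xs i].

End SymSpace.

(* Main.v *)
Require Import Defs.
From HB Require Import structures.
From mathcomp Require Import all_boot all_order all_algebra.
From mathcomp Require Import reals.
From mathcomp Require Import complex ring.
Set Implicit Arguments. Unset Strict Implicit. Unset Printing Implicit Defensive.
Import Order.TTheory GRing.Theory Num.Theory.
Local Open Scope ring_scope.

Section RCF.
Variable R : rcfType.
Local Open Scope complex_scope.
Lemma rcf_factor (p : {poly R}) : (1 < size p)%N ->
  (exists l r, p = r * ('X - l%:P)) \/
  (exists a b r, b != 0 /\ p = r * (('X - a%:P)^+2 + (b^+2)%:P)).
Proof.
move=> sp.
pose f := real_complex R.
have spc : size (map_poly f p) != 1%N by rewrite size_map_poly gtn_eqF.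
have [[a b] rz] := closed_rootP _ spc.
case: (eqVneq b 0) rz => [->|bn0] rz.
  left; have : root p a by rewrite -(fmorph_root f) .
  by move/factor_theorem=> [r ->]; exists a, r.
right; exists a, b, (p %/ (('X - a%:P)^+2 + (b^+2)%:P)); split => //.
apply/esym/divpK; rewrite -(dvdp_map f).
have -> : map_poly f (('X - a%:P)^+2 + (b^+2)%:P) =
   \prod_(z <- [:: a +i* b; a -i* b]) ('X - z%:P).
  rewrite big_cons big_seq1 rmorphD rmorphXn rmorphB /= map_polyX !map_polyC /=.
  set z := a +i* b; set w := a -i* b.
  have e1 : z + w = (a + a)%:C.
    rewrite /z /w; apply/eqP; by rewrite eq_complex /= subrr !eqxx.
  have e2 : z * w = (a^+2 + b^+2)%:C.
    rewrite /z /w; apply/eqP; rewrite eq_complex /= !expr2; apply/andP; split; apply/eqP; ring.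
  transitivity ('X^2 - (z + w)%:P * 'X + (z * w)%:P); last by ring.
  rewrite e1 e2 !rmorphD /=. ring.
apply: uniq_roots_dvdp.
  rewrite /= rz andbT.
  have := complex_root_conj (map_poly f p) (a +i* b).
  rewrite -map_poly_comp (eq_map_poly (conjc_real (R:=R))) rz => <-.
  by [].
rewrite uniq_rootsE /= inE andbT eq_complex /= eqxx /=.
apply: contra bn0 => /eqP e; have : b + b = 0 by rewrite {2}e subrr.
by move/eqP; rewrite -mulr2n -mulr_natr mulf_eq0 pnatr_eq0 orbF.
Qed.
End RCF.

Section Single.
Variables (R : rcfType) (N : nat) (A : 'M[R]_N.+1).
Hypothesis hA : A^T = A.
Local Notation rv := 'rV[R]_N.+1.

Definition norm2 (u : rv) := (u *m u^T) 0 0.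

Lemma norm2E u : norm2 u = \sum_j u 0 j ^+ 2.
Proof. by rewrite /norm2 mxE; apply: eq_bigr => j _; rewrite mxE expr2. Qed.

Lemma norm2_ge0 u : 0 <= norm2 u.
Proof. by rewrite norm2E sumr_ge0 // => j _; rewrite sqr_ge0. Qed.

Lemma norm2_eq0 u : norm2 u = 0 -> u = 0.
Proof.
rewrite norm2E => /eqP; rewrite psumr_eq0 => [/allP h|j _]; last by rewrite sqr_ge0.
apply/rowP => j; rewrite mxE; apply/eqP; rewrite -sqrf_eq0.
by have := h j; rewrite mem_index_enum => /(_ isT) /implyP /(_ isT).
Qed.

Lemma sq_inj (B : 'M[R]_N.+1) (u : rv) : B^T = B -> u *m B *m B = 0 -> u *m B = 0.
Proof.
move=> hB h; apply: norm2_eq0; rewrite /norm2 trmx_mul hB mulmxA h.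
by rewrite mul0mx mxE.
Qed.

Lemma quad_inj (a b : R) (u : rv) : b != 0 ->
  u *m horner_mx A (('X - a%:P)^+2 + (b^+2)%:P) = 0 -> u = 0.
Proof.
move=> bn0; rewrite rmorphD rmorphXn rmorphB /= horner_mx_X horner_mx_C.
set B := A - a%:M.
have hB : B^T = B by rewrite /B linearB /= hA tr_scalar_mx.
rewrite expr2 mulmxDr horner_mx_C mul_mx_scalar mulmxA => h.
have : norm2 (u *m B) + b ^+ 2 * norm2 u = 0.
  have := congr1 (fun M : 'M_(1, N.+1) => (M *m u^T) 0 0) h.
  rewrite /= mulmxDl mul0mx [X in _ = X -> _]mxE => <-.
  rewrite mxE [in RHS]mxE /norm2 trmx_mul hB !mulmxA -scalemxAl mxE.
  by rewrite [in RHS]mxE.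
move/eqP; rewrite paddr_eq0 ?norm2_ge0 ?(mulr_ge0 (sqr_ge0 b) (norm2_ge0 u)) //.
by move=> /andP[_]; rewrite mulf_eq0 sqrf_eq0 (negbTE bn0) /= => /eqP /norm2_eq0.
Qed.

Definition closedP (P : rv -> Prop) :=
  [/\ forall u v, P u -> P v -> P (u + v), forall (c : R) u, P u -> P (c *: u)
    & forall u, P u -> P (u *m A)].

Lemma closed_horner (P : rv -> Prop) w : P w -> closedP P ->
  forall q, P (w *m horner_mx A q).
Proof.
move=> Pw [hD hZ hM]; elim/poly_ind => [|q c IH].
  by rewrite rmorph0 mulmx0 -(scale0r w); apply: hZ.
rewrite rmorphD rmorphM /= horner_mx_X horner_mx_C mulmxDr mulmxA mul_mx_scalar.
by apply: hD; [apply: hM | apply: hZ].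
Qed.

Definition good_decomp (w : rv) (t : seq (rv * R)) :=
  w = \sum_(y <- t) y.1 /\ forall y, y \in t ->
    (y.1 *m A = y.2 *: y.1) /\ forall P, P w -> closedP P -> P y.1.

Lemma single_decomp w : exists t, good_decomp w t.
Proof.
suff main : forall p, p != 0 -> forall w0, w0 *m horner_mx A p = 0 ->
    exists t, good_decomp w0 t.
  apply: (main (mxminpoly A)); first by rewrite monic_neq0 ?mxminpoly_monic.
  by rewrite mx_root_minpoly mulmx0.
move=> {w} p; have [s] := ubnP (size p); elim: s p => [//|s IH] p.
rewrite ltnS => sp pn0 w hw.
have [sp1|sp1] := leqP (size p) 1%N.
  have [c pc] : exists c, p = c%:P by exists p`_0; apply: size1_polyC.
  move: pn0 hw; rewrite pc horner_mx_C mul_mx_scalar polyC_eq0 => cn0.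
  move/eqP; rewrite scaler_eq0 (negbTE cn0) /= => /eqP ->.
  by exists [::]; split => [|y]; rewrite ?big_nil.
have hM : forall q1 q2, horner_mx A (q1 * q2) = horner_mx A q1 *m horner_mx A q2.
  by move=> q1 q2; rewrite rmorphM.
have hX : forall l, horner_mx A ('X - l%:P) = A - l%:M.
  by move=> l; rewrite rmorphB /= horner_mx_X horner_mx_C.
have [[l [r pr]]|[a [b [r [bn0 pr]]]]] := rcf_factor sp1.
- have rn0 : r != 0 by apply: contraNneq pn0 => r0; rewrite pr r0 mul0r.
  have srp : (size r < s)%N.
    have e : size p = (size r).+1.
      by rewrite pr size_mul ?polyXsubC_eq0 // size_XsubC addn2.
    by rewrite e in sp.
  have [rl|nrl] := boolP (root r l).
    have [s' rs'] := factor_theorem _ _ rl.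
    apply: (IH r srp rn0).
    rewrite rs' rmorphM /= mulmxA hX; apply: (sq_inj (B := A - l%:M)).
      by rewrite linearB /= hA tr_scalar_mx.
    have e : horner_mx A p = horner_mx A s' *m (A - l%:M) *m (A - l%:M).
      by rewrite pr rs' !rmorphM /= hX.
    by rewrite -hw e !mulmxA.
  set c := r.[l].
  have cn0 : c != 0 by [].
  set w1 := w *m horner_mx A (c^-1%:P * r).
  set w2 := w *m horner_mx A (1 - c^-1%:P * r).
  have r1 : root (1 - c^-1%:P * r) l.
    by rewrite /root !hornerE -/c mulVf // subrr.
  have [s2 hs2] := factor_theorem _ _ r1.
  have hw2 : w2 *m horner_mx A r = 0.
    rewrite /w2 -mulmxA -hM hs2 -mulrA [_ * r]mulrC -pr mulrC hM.
    by rewrite mulmxA hw mul0mx.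
  have [t2 [t2s t2p]] := IH r srp rn0 w2 hw2.
  exists ((w1, l) :: t2); split.
    rewrite big_cons -t2s /w1 /w2 -mulmxDr.
    by rewrite -[_ + _](rmorphD (horner_mx A)) addrC subrK rmorph1 mulmx1.
  move=> y; rewrite inE => /orP[/eqP ->|yt].
    split; last by move=> P Pw cP; apply: closed_horner.
    apply/eqP; rewrite /= -subr_eq0 -mul_mx_scalar -mulmxBr -hX.
    by rewrite /w1 -mulmxA -hM -mulrA -pr mulrC hM mulmxA hw mul0mx.
  have [ey Py] := t2p y yt; split => // P Pw cP.
  by apply: Py => //; apply: closed_horner.
- set q := ('X - a%:P) ^+ 2 + (b ^+ 2)%:P in pr.
  have sq : size q = 3%N.
    rewrite /q size_addl size_exp_XsubC // (leq_ltn_trans (size_polyC_leq1 _)) //.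
  have qn0 : q != 0 by rewrite -size_poly_eq0 sq.
  have rn0 : r != 0 by apply: contraNneq pn0 => r0; rewrite pr r0 mul0r.
  have srp : (size r < s)%N.
    have e : size p = (size r).+2 by rewrite pr size_mul // sq addn3.
    by rewrite e in sp; apply: ltnW.
  apply: (IH r srp rn0); apply: (quad_inj (a := a) bn0).
  by rewrite -mulmxA -hM -pr hw.
Qed.
End Single.

Section Multi.
Variables (R : rcfType) (N : nat).
Local Notation rv := 'rV[R]_N.+1.
Local Notation T := (rv * seq R)%type.

Lemma gather (T0 : eqType) (g : T0 -> rv) (Q : T -> Prop) (t : seq T0) :
  (forall y, y \in t -> exists t' : seq T, g y = \sum_(z <- t') z.1 /\ forall z, z \in t' -> Q z) ->
  exists t' : seq T, \sum_(y <- t) g y = \sum_(z <- t') z.1 /\ forall z, z \in t' -> Q z.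
Proof.
elim: t => [|y t IH] h; first by exists [::]; rewrite !big_nil.
have [t1 [e1 q1]] := h y (mem_head _ _).
have [t2 [e2 q2]] : exists t' : seq T, \sum_(y <- t) g y = \sum_(z <- t') z.1 /\ forall z, z \in t' -> Q z.
  by apply: IH => y' y't; apply: h; rewrite inE y't orbT.
exists (t1 ++ t2); rewrite big_cat big_cons e1 e2; split => // z.
by rewrite mem_cat => /orP[]; [apply: q1 | apply: q2].
Qed.

Definition closedL (As : seq 'M[R]_N.+1) (P : rv -> Prop) :=
  [/\ forall u v, P u -> P v -> P (u + v), forall (c : R) u, P u -> P (c *: u)
    & forall j, (j < size As)%N -> forall u, P u -> P (u *m As`_j)].

Lemma multi_decomp (As : seq 'M[R]_N.+1) :
  (forall A, A \in As -> A^T = A) ->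
  (forall A B, A \in As -> B \in As -> A *m B = B *m A) ->
  forall w, exists t : seq T, w = \sum_(y <- t) y.1 /\ forall y, y \in t ->
    (forall j, (j < size As)%N -> y.1 *m As`_j = y.2`_j *: y.1) /\
    (forall P, P w -> closedL As P -> P y.1).
Proof.
elim: As => [|A As IH] hs hc w.
  exists [:: (w, [::])]; rewrite big_seq1; split => // y; rewrite inE => /eqP -> /=.
  by split.
have [] := IH _ _ w.
- by move=> B BAs; apply: hs; rewrite inE BAs orbT.
- by move=> B C BAs CAs; apply: hc; rewrite inE ?BAs ?CAs orbT.
move=> t [tw tp].
have hA : A^T = A by apply: hs; rewrite mem_head.
have := @gather _ (fun y => y.1) (fun z => (forall j, (j < size (A :: As))%N -> z.1 *m (A :: As)`_j = z.2`_j *: z.1) /\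
    (forall P, P w -> closedL (A :: As) P -> P z.1)) t.
case=> [y yt|t' [e' p']]; last first.
  by exists t'; split => //; rewrite tw.
have [ey Py] := tp y yt.
have [s [es ps]] := single_decomp hA y.1.
exists [seq (z.1, z.2 :: y.2) | z <- s]; split.
  by rewrite big_map es.
move=> _ /mapP [z zs ->] /=.
have [ez Pz] := ps z zs.
have clA : forall P, closedL (A :: As) P -> closedP A P.
  by move=> P [h1 h2 h3]; split => // u; apply: (h3 0%N).
have clAs : forall P, closedL (A :: As) P -> closedL As P.
  by move=> P [h1 h2 h3]; split => // j hj; apply: (h3 j.+1).
split; last first.
  by move=> P Pw cP; apply: Pz; [apply: Py => //; apply: clAs | apply: clA].
case=> [_|j] /=; first by [].
rewrite ltnS => hj.
pose P (u : rv) := u *m As`_j = y.2`_j *: u.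
have hcom : A *m As`_j = As`_j *m A.
  by apply: hc; rewrite ?mem_head // inE mem_nth ?orbT.
suff : P z.1 by []. apply: Pz; first exact: ey hj. split.
- by move=> u v; rewrite /P mulmxDl scalerDr => -> ->.
- by move=> c u; rewrite /P -scalemxAl => ->; rewrite scalerA mulrC -scalerA.
- by move=> u; rewrite /P -mulmxA hcom mulmxA => ->; rewrite scalemxAl.
Qed.
End Multi.
Section Lie.
Variables (R : realType) (n : nat).
Local Notation mx := 'M[R]_n.
Implicit Types A B C H X Y : mx.

Lemma lieDl A B C : lie (A + B) C = lie A C + lie B C.
Proof. by rewrite /lie mulmxDl mulmxDr opprD addrACA. Qed.
Lemma lieDr A B C : lie A (B + C) = lie A B + lie A C.
Proof. by rewrite /lie mulmxDl mulmxDr opprD addrACA. Qed.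
Lemma lieZl (c : R) A B : lie (c *: A) B = c *: lie A B.
Proof. by rewrite /lie scalerBr -scalemxAr -scalemxAl. Qed.
Lemma lieZr (c : R) A B : lie A (c *: B) = c *: lie A B.
Proof. by rewrite /lie scalerBr -scalemxAr -scalemxAl. Qed.
Lemma lie_anti A B : lie A B = - lie B A.
Proof. by rewrite /lie opprB. Qed.
Lemma lie_self A : lie A A = 0.
Proof. by rewrite /lie subrr. Qed.
Lemma lie0l A : lie 0 A = 0.
Proof. by rewrite /lie mul0mx mulmx0 subrr. Qed.
Lemma lie0r A : lie A 0 = 0.
Proof. by rewrite /lie mul0mx mulmx0 subrr. Qed.
Lemma lieNl A B : lie (- A) B = - lie A B.
Proof. by rewrite -scaleN1r lieZl scaleN1r. Qed.
Lemma lie_jacobi A B C : lie A (lie B C) = lie (lie A B) C + lie B (lie A C).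
Proof.
rewrite /lie !mulmxBl !mulmxBr !mulmxA.
set a := A *m B *m C; set b := A *m C *m B; set c := B *m A *m C;
  set d := B *m C *m A; set e := C *m A *m B; set f := C *m B *m A.
rewrite !opprB [RHS]addrACA !addrA !subrK -!addrA; congr (_ + _).
by rewrite addrCA [RHS]addrCA; congr (_ + _); rewrite addrC. Qed.
Lemma lie_tr A B : (lie A B)^T = lie B^T A^T.
Proof. by rewrite /lie linearB /= !trmx_mul. Qed.
Lemma lie_sum (I : Type) (r : seq I) (P : pred I) (F : I -> mx) X :
  lie (\sum_(i <- r | P i) F i) X = \sum_(i <- r | P i) lie (F i) X.
Proof.
elim/big_rec2: _ => [|i y1 y2 _ <-]; first by rewrite lie0l.
by rewrite lieDl.
Qed.

Lemma mxvec_dot X Y : mxvec X *m (mxvec Y)^T = (\tr (X *m Y^T))%:M.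
Proof.
apply/matrixP => i j; rewrite !ord1 !mxE eqxx mulr1n.
rewrite (reindex (uncurry (@mxvec_index n n))); last exact: curry_mxvec_bij.
rewrite /mxtrace.
transitivity (\sum_(p : 'I_n * 'I_n) X p.1 p.2 * Y p.1 p.2).
  by apply: eq_bigr => -[k l] _; rewrite /= !mxE !mxvecE.
rewrite -(pair_bigA _ (fun i j => X i j * Y i j)); apply: eq_bigr => k _; rewrite mxE; apply: eq_bigr => l _.
by rewrite !mxE.
Qed.

Definition adm H : 'M[R]_(n * n) := lin_mx (mulmx H) - lin_mx (mulmxr H).

Lemma adm_vec H X : mxvec X *m adm H = mxvec (lie H X).
Proof. by rewrite mulmxBr !mul_vec_lin /= linearB. Qed.

Lemma mx_eq_rows (M M' : 'M[R]_(n * n)) :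
  (forall X, mxvec X *m M = mxvec X *m M') -> M = M'.
Proof.
move=> h; apply/row_matrixP => i; rewrite !rowE.
by have := h (vec_mx (delta_mx 0 i)); rewrite vec_mxK.
Qed.

Lemma rv_eq_dot (u v : 'rV[R]_(n * n)) :
  (forall Y, u *m (mxvec Y)^T = v *m (mxvec Y)^T) -> u = v.
Proof.
move=> h; apply/rowP => k; have := h (vec_mx (delta_mx 0 k)).
rewrite vec_mxK trmx_delta -!colE => /matrixP /(_ 0 0).
by rewrite !mxE.
Qed.

Lemma tr11 (M : 'M[R]_1) : M^T = M.
Proof. by apply/matrixP => i j; rewrite !ord1 mxE. Qed.

Lemma adm_sym H : H^T = H -> (adm H)^T = adm H.
Proof.
move=> hH; apply: mx_eq_rows => X; apply: rv_eq_dot => Y.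
rewrite -[LHS]tr11 !trmx_mul !trmxK mulmxA !adm_vec !mxvec_dot.
congr (scalar_mx _).
rewrite /lie !mulmxBl !raddfB /=; congr (_ - _).
  by rewrite -mxtrace_tr !trmx_mul trmxK hH !mulmxA mxtrace_mulC mulmxA.
by rewrite -mxtrace_tr !trmx_mul trmxK hH !mulmxA.
Qed.

Lemma adm_comm H H' : lie H H' = 0 -> adm H *m adm H' = adm H' *m adm H.
Proof.
move=> hc; apply: mx_eq_rows => X; rewrite !mulmxA !adm_vec.
by rewrite (lie_jacobi H') (lie_anti H' H) hc oppr0 lie0l add0r.
Qed.
End Lie.
Definition alpha (R : realType) n (a : {vspace 'M[R]_n}) (lam : seq R) (H : 'M[R]_n) :=
  \sum_(i < \dim a) coord (vbasis a) i H * lam`_i.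

Lemma weight_decomp (R : realType) (n : nat) (a : {vspace 'M[R]_n}) :
  (forall H, H \in a -> H^T = H) -> abelian_sub a ->
  forall (Q : 'M[R]_n -> Prop),
    (forall Y Z, Q Y -> Q Z -> Q (Y + Z)) -> (forall (c : R) Y, Q Y -> Q (c *: Y)) ->
    (forall H Y, H \in a -> Q Y -> Q (lie H Y)) ->
  forall X, Q X -> exists s : seq ('M[R]_n * seq R), X = \sum_(y <- s) y.1 /\
    forall y, y \in s -> Q y.1 /\ forall H, H \in a -> lie H y.1 = alpha a y.2 H *: y.1.
Proof.
case: n a => [|n'] a hsym hab Q QD QZ QL X QX.
  exists [::]; rewrite big_nil; split => //.
  by apply/matrixP => -[].
pose N := (n' + n' * n'.+1)%N.
pose As : seq 'M[R]_N.+1 := [seq adm b | b <- vbasis a].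
have sAs : size As = \dim a by rewrite size_map size_tuple.
have nAs : forall j, (j < \dim a)%N -> As`_j = adm (vbasis a)`_j.
  by move=> j hj; rewrite (nth_map 0) // size_tuple.
have ba : forall j, (j < \dim a)%N -> (vbasis a)`_j \in a.
  by move=> j hj; apply: vbasis_mem; rewrite mem_nth // size_tuple.
pose vm (u : 'rV[R]_N.+1) : 'M[R]_n'.+1 := vec_mx (u : 'rV[R]_(n'.+1 * n'.+1)).
pose mv (Y : 'M[R]_n'.+1) : 'rV[R]_N.+1 := mxvec Y.
have vmD : forall u v, vm (u + v) = vm u + vm v by move=> u v; rewrite /vm linearD.
have vmZ : forall (c : R) u, vm (c *: u) = c *: vm u by move=> c u; rewrite /vm linearZ.
have vmK : forall Y, vm (mv Y) = Y by move=> Y; rewrite /vm /mv mxvecK.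
have vadm : forall (b : 'M[R]_n'.+1) (u : 'rV[R]_N.+1),
    vm (u *m (adm b : 'M[R]_N.+1)) = lie b (vm u).
  move=> b u; have := adm_vec b (vm u); rewrite /vm vec_mxK => ->.
  by rewrite mxvecK.
have [] := @multi_decomp R N As _ _ (mv X).
- move=> A /mapP [b bin ->]; have := adm_sym (hsym _ (vbasis_mem bin)); exact.
- move=> A B /mapP [b bin ->] /mapP [c cin ->]; have := adm_comm (hab _ _ (vbasis_mem bin) (vbasis_mem cin)); exact.
move=> t [tX tp].
exists [seq (vm y.1, y.2) | y <- t]; split.
  rewrite big_map -{1}(vmK X) tX.
  by rewrite /vm linear_sum.
move=> _ /mapP [y yt ->] /=.
have [ey Py] := tp y yt.
split.
  apply: (Py (fun u => Q (vm u))); first by rewrite vmK.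
  split.
  - by move=> u v; rewrite vmD; apply: QD.
  - by move=> c u; rewrite vmZ; apply: QZ.
  - move=> j hj u; rewrite sAs in hj; rewrite nAs // vadm; apply: QL; exact: ba.
move=> H Ha.
have ej : forall j : 'I_(\dim a), lie (vbasis a)`_j (vm y.1) = y.2`_j *: vm y.1.
  by move=> j; rewrite -vadm -nAs // ey ?vmZ // sAs.
transitivity (lie (\sum_(i < \dim a) coord (vbasis a) i H *: (vbasis a)`_i) (vm y.1)); first by rewrite -(coord_vbasis Ha).
rewrite lie_sum /alpha scaler_suml.
apply: eq_bigr => j _; rewrite lieZl ej scalerA.
by [].
Qed.

Lemma lieNr (R : realType) n (A B : 'M[R]_n) : lie A (- B) = - lie A B.
Proof. by rewrite -scaleN1r lieZr scaleN1r. Qed.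

Lemma centralizer_space (R : realType) n (g V : {vspace 'M[R]_n}) :
  exists Z : {vspace 'M[R]_n}, forall X,
    X \in Z <-> [/\ X \in g, X^T = X & forall v, v \in V -> lie v X = 0].
Proof.
pose f (v : 'M[R]_n) : 'End('M[R]_n) := linfun (mulmx v) - linfun (mulmxr v).
have fE : forall v X, f v X = lie v X.
  by move=> v X; rewrite /f add_lfunE opp_lfunE !lfunE.
pose t : 'End('M[R]_n) := linfun (@trmx R n n) - \1%VF.
have tE : forall X, t X = X^T - X.
  by move=> X; rewrite /t add_lfunE opp_lfunE !lfunE.
exists (g :&: lker t :&: \bigcap_(i < \dim V) lker (f (vbasis V)`_i))%VS => X.
rewrite !memv_cap memv_ker tE subr_eq0.
have -> : (X \in \bigcap_(i < \dim V) lker (f (vbasis V)`_i))%VS =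
    [forall i : 'I_(\dim V), lie (vbasis V)`_i X == 0].
  apply/idP/forallP => [h i|h].
    move: h; rewrite memvE => /subv_bigcapP /(_ i isT); rewrite -memvE.
    by rewrite memv_ker fE.
  rewrite memvE; apply/subv_bigcapP => i _; rewrite -memvE memv_ker fE.
  exact: h.
split.
  case/andP => /andP [Xg /eqP XT] /forallP h; split => // v vV.
  rewrite (coord_vbasis vV) lie_sum big1 // => i _.
  by rewrite lieZl (eqP (h i)) scaler0.
case=> Xg XT h; rewrite Xg XT eqxx /=; apply/forallP => i.
by rewrite h // vbasis_mem // mem_nth // size_tuple.
Qed.

Lemma max_abelian_in (R : realType) n (g a : {vspace 'M[R]_n}) (S : 'M[R]_n) :
  max_abelian g a -> S \in g -> S^T = S -> (forall H, H \in a -> lie H S = 0) ->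
  S \in a.
Proof.
case=> hap hab hamax Sg ST hS.
have dec : forall Y, Y \in (a + <[S]>)%VS -> exists h c, [/\ h \in a & Y = h + c *: S].
  move=> Y /memv_addP [h ha [w /vlineP [c ->] ->]]; by exists h, c.
have <- : (a + <[S]>)%VS = a.
  apply: hamax; last exact: addvSl.
  - move=> Y /dec [h [c [ha ->]]]; have [hg hT] := hap h ha; split.
      by rewrite memvD // memvZ.
    by rewrite linearD linearZ /= hT ST.
  - move=> Y1 Y2 /dec [h1 [c1 [h1a ->]]] /dec [h2 [c2 [h2a ->]]].
    rewrite !lieDl !lieDr !lieZl !lieZr (hab _ _ h1a h2a) (hS _ h1a).
    rewrite (lie_anti S h2) (hS _ h2a) lie_self.
    by rewrite !(scaler0, oppr0, addr0).
by rewrite (subvP (addvSr _ _)) // memv_line.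
Qed.

Unset Implicit Arguments.

Theorem proposition2p13 (R : realType) (n : nat) (g : {vspace 'M[R]_n})
  (r k : nat) (P V : {vspace 'M[R]_n}) :
  noncompact_type g -> rank_is g r -> (1 <= k)%N -> (k <= r)%N ->
  splits_with g P V k -> srk_is g k (\dim P) ->
  forall a : {vspace 'M[R]_n}, max_abelian g a -> (V <= a)%VS ->
  forall H0 : 'M[R]_n, regular g a H0 ->
  forall X : 'M[R]_n, X \in P <-> in_a_plus_roots g a V H0 X.
Proof.
move=> [hsub htr _ _] _ k1 _ [hlts hVP hdV hVc] [_ hmaxP] a hma hVa H0 [H0a hreg] X.
have [hap hab hamax] := hma.
have Va : forall v, v \in V -> v \in a by move=> v; apply: (subvP hVa).
have [Z hZ] := centralizer_space g V.
have PZ : (P <= Z)%VS.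
  apply/subvP => Y YP; apply/hZ; have [Yg YT] := hlts.1 Y YP; split => //.
  by move=> v vV; apply: hVc.
have ZP : (\dim Z <= \dim P)%N.
  apply: hmaxP; exists V; split => //.
  - split.
      by move=> Y /hZ [].
    move=> A B C /hZ [Ag AT Av] /hZ [Bg BT Bv] /hZ [Cg CT Cv]; apply/hZ; split.
    + exact: (hsub _ _ Ag (hsub _ _ Bg Cg)).
    + by rewrite lie_tr lie_tr AT BT CT lie_anti (lie_anti C) lieNr opprK.
    + move=> v vV; rewrite (lie_jacobi v A) (lie_jacobi v B) (Av _ vV) (Bv _ vV) (Cv _ vV).
      by rewrite !lie0l lie0r !add0r lie0r.
  - apply/subvP => v vV; apply/hZ; have [vg vT] := hap v (Va v vV); split => //.
    by move=> w wV; apply: hab; apply: Va.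
  - by move=> v w vV /hZ [_ _ ]; apply.
have PeqZ : P = Z by apply/eqP; rewrite eqEdim PZ ZP.
rewrite PeqZ; split; last first.
  case=> H [m [al [Xs [Ha hi ->]]]].
  rewrite memvD //.
    have [Hg HT] := hap H Ha; apply/hZ; split => // v vV.
    by apply: hab => //; apply: Va.
  apply: memv_suml => i _; have [_ _ alV [XT [Y [W [[Yg Yl] [Wg Wl] e]]]]] := hi i.
  rewrite e; apply/hZ; split.
  - by rewrite memvD.
  - by rewrite -e.
  - move=> v vV; rewrite lieDr (Yl _ (Va _ vV)) (Wl _ (Va _ vV)) alV //.
    by rewrite oppr0 !scale0r addr0.
move=> /hZ [Xg XT XV].
pose Q (Y : 'M[R]_n) := Y \in g /\ forall v, v \in V -> lie v Y = 0.
have [] := @weight_decomp R n a (fun H Ha => (hap H Ha).2) hab Q _ _ _ X (conj Xg XV).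
- move=> Y W [Yg Yv] [Wg Wv]; split; first by rewrite memvD.
  by move=> v vV; rewrite lieDr Yv // Wv // addr0.
- move=> c Y [Yg Yv]; split; first by rewrite memvZ.
  by move=> v vV; rewrite lieZr Yv // scaler0.
- move=> H Y Ha [Yg Yv]; split; first by apply: hsub => //; exact: (hap H Ha).1.
  move=> v vV; rewrite lie_jacobi (hab _ _ (Va _ vV) Ha) lie0l add0r Yv //.
  by rewrite lie0r.
move=> s [sX sp].
pose al (y : 'M[R]_n * seq R) := alpha a y.2.
have facts : forall y, y \in s -> [/\ y.1 \in g, y.1^T \in g,
    (forall H, H \in a -> lie H y.1 = al y H *: y.1),
    (forall H, H \in a -> lie H y.1^T = - al y H *: y.1^T) &
    (forall v, v \in V -> lie v y.1 = 0)].
  move=> y ys; have [[yg yV] yl] := sp y ys; split => //; first exact: htr.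
  move=> H Ha; have HT := (hap H Ha).2.
  have := lie_tr H y.1; rewrite HT yl // linearZ /= lie_anti => e.
  by rewrite -[lie H _]opprK -e scaleNr.
have allin : forall y (H H' : 'M[R]_n) (c d : R),
    al y (c *: H + d *: H') = c * al y H + d * al y H'.
  move=> y H H' c d; rewrite /al /alpha !mulr_sumr -big_split /=.
  apply: eq_bigr => i _; rewrite linearD !linearZ /=; ring.
pose S (y : 'M[R]_n * seq R) := 2^-1 *: (y.1 + y.1^T).
have ST : forall y, (S y)^T = S y.
  by move=> y; rewrite /S linearZ linearD /= trmxK addrC.
have Sg : forall y, y \in s -> S y \in g.
  by move=> y ys; have [yg yTg _ _ _] := facts y ys; rewrite memvZ // memvD.
pose cond y := (y.1 != 0) && (al y H0 != 0).
pose alp y : 'M[R]_n -> R := if 0 < al y H0 then al y else (fun H => - al y H).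
pose s' := [seq y <- s | cond y].
pose y0 := (0 : 'M[R]_n, [::] : seq R).
have good : forall y, y \in s -> cond y -> [/\ is_root g a (alp y), 0 < alp y H0,
    (forall v, v \in V -> alp y v = 0) & p_root g a (alp y) (S y)].
  move=> y ys /andP [y0n ay0].
  have [yg yTg yl yTl yV] := facts y ys.
  have alV : forall v, v \in V -> al y v = 0.
    move=> v vV; apply/eqP; have := yV v vV; rewrite yl ?Va // => /eqP.
    by rewrite scaler_eq0 (negbTE y0n) orbF.
  have rs1 : root_space g a (al y) (2^-1 *: y.1).
    split; first by rewrite memvZ.
    by move=> H Ha; rewrite lieZr yl // !scalerA mulrC.
  have rs2 : root_space g a (fun H => - al y H) (2^-1 *: y.1^T).
    split; first by rewrite memvZ.
    by move=> H Ha; rewrite lieZr yTl // !scalerA mulrC.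
  rewrite /alp; case: ifP => hpos.
    split => //.
    - split; [by move=> c d H H' _ _; apply: allin | by exists H0; split | by exists y.1].
    - split => //; exists (2^-1 *: y.1), (2^-1 *: y.1^T); split => //.
      by rewrite /S scalerDr.
  have hneg : 0 < - al y H0.
    by rewrite oppr_gt0 lt_neqAle ay0 /= leNgt hpos.
  split => //.
  - split.
    + move=> c d H H' _ _; rewrite allin; ring.
    + by exists H0; split => //; rewrite oppr_eq0.
    + exists y.1^T; split; first by rewrite trmx_eq0.
      by split => // H Ha; apply: yTl.
  - by move=> v vV; rewrite alV ?oppr0.
  - split => //; exists (2^-1 *: y.1^T), (2^-1 *: y.1); split => //.
      split; first by rewrite memvZ.
      by move=> H Ha; rewrite opprK; apply: rs1.2.
    by rewrite /S scalerDr addrC.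
exists (\sum_(y <- s | ~~ cond y) S y), (size s'), (fun i => alp (nth y0 s' i)),
  (fun i => S (nth y0 s' i)).
split.
- rewrite big_seq_cond; apply: memv_suml => y /andP [ys ncy].
  case: (eqVneq y.1 0) => [y0e|y0n].
    by rewrite /S y0e trmx0 addr0 scaler0 mem0v.
  have ay0 : al y H0 = 0 by apply/eqP; move: ncy; rewrite /cond y0n /= negbK.
  have [yg yTg yl yTl yV] := facts y ys.
  have alz : forall H, H \in a -> al y H = 0.
    move=> H Ha; apply/eqP; apply/negPn/negP => hne.
    have isr : is_root g a (al y).
      by split; [move=> c d H1 H2 _ _; apply: allin | exists H | exists y.1].
    by move: (hreg _ isr); rewrite ay0 eqxx.
  apply: (max_abelian_in hma (Sg y ys) (ST y)) => H Ha.
  by rewrite /S lieZr lieDr yl // yTl // alz // oppr0 !scale0r addr0 scaler0.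
- move=> i; have : nth y0 s' i \in s' by rewrite mem_nth.
  rewrite mem_filter => /andP [cy ys]; exact: good.
have e1 : X = \sum_(y <- s) S y.
  rewrite /S -scaler_sumr big_split /= -sX.
  have -> : \sum_(y <- s) y.1^T = X^T by rewrite sX linear_sum.
  by rewrite XT -mulr2n -scaler_nat scalerA mulVf ?pnatr_eq0 // scale1r.
rewrite {1}e1 (bigID cond) /= addrC; congr (_ + _).
by rewrite -big_filter (big_nth y0) big_mkord.
Qed.
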